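(* Let $\mathcal{AF}_{\vdash}=(\vdash,\overline{\cdot},\widehat{\cdot})$ be a setting such that $\vdash$ satisfies Cut and $\widehat{\cdot}$ is pointed. Let $\mathcal{S}\subseteq\mathcal{L}$ and $\phi\in\mathcal{L}$ with $\mathcal{S}\mathrel{\mid\!\sim}^{\mathcal{AF}_{\vdash}}_{\mathsf{Grd}}\phi$. Then: (1) there is an argument $(\Phi,\phi)\in\mathsf{Grd}(\mathcal{AF}_{\vdash}(\mathcal{S}))$; (2) $\mathsf{Grd}(\mathcal{AF}_{\vdash}(\mathcal{S}))\subseteq\mathsf{Grd}(\mathcal{AF}_{\vdash^{+\phi}}(\mathcal{S}))$; (3) $\mathsf{Grd}(\mathcal{AF}_{\vdash^{+\phi}}(\mathcal{S}))\cap\mathit{Arg}_{\vdash}(\mathcal{S})=\mathsf{Grd}(\mathcal{AF}_{\vdash}(\mathcal{S}))$; (4) with $\Phi$ as in (1), for every $a=(\Gamma,\gamma)\in\mathsf{Grd}(\mathcal{AF}_{\vdash^{+\phi}}(\mathcal{S}))\setminus\mathit{Arg}_{\vdash}(\mathcal{S})$ we have $(\Gamma\cup\Phi,\gamma)\in\mathsf{Grd}(\mathcal{AF}_{\vdash}(\mathcal{S}))$.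
   Context: $\mathcal{L}$ is a set of formulas, $\wp_{\sf fin}(X)$ the finite subsets of $X$. A setting is $(\vdash,\overline{\cdot},\widehat{\cdot})$ with ${\vdash}\subseteq\wp_{\sf fin}(\mathcal{L})\times\mathcal{L}$ arbitrary, $\overline{\cdot}:\mathcal{L}\to\wp(\mathcal{L})$, $\widehat{\cdot}$ assigning to each nonempty finite set of formulas a finite set of formulas, with $\widehat{\emptyset}=\emptyset$. $\mathit{Arg}_{\vdash}(\mathcal{S})=\{(\Gamma,\gamma):\Gamma\subseteq\mathcal{S}\text{ finite},\Gamma\vdash\gamma\}$; in $\mathcal{AF}_{\vdash}(\mathcal{S})$, $(\Gamma,\gamma)$ attacks $(\Gamma',\gamma')$ iff $\gamma\in\overline{\psi}$ for some $\psi\in\widehat{\Gamma'}$. A complete extension is a conflict-free set of arguments that defends each member (every attacker of a member is attacked by a member) and contains every argument it defends; $\mathsf{Grd}(\mathcal{AF}_{\vdash}(\mathcal{S}))$ is the $\subseteq$-minimal complete extension. $\mathcal{S}\mathrel{\mid\!\sim}^{\mathcal{AF}_{\vdash}}_{\mathsf{Grd}}\phi$ iff the grounded extension contains an argument with conclusion $\phi$. $\vdash^{+\phi}$ is the transitive closure of ${\vdash}\cup\{(\emptyset,\phi)\}$ and $\mathcal{AF}_{\vdash^{+\phi}}=(\vdash^{+\phi},\overline{\cdot},\widehat{\cdot})$. $\vdash$ satisfies Cut iff for every $\phi\in\mathcal{L}$ and all finite $\Gamma,\Delta$ and $\gamma$: if $\Gamma\vdash\phi$ and $\Delta\vdash^{+\phi}\gamma$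 then $\Gamma\cup\Delta\vdash\gamma$. $\widehat{\cdot}$ is pointed iff $\widehat{\Gamma\cup\Delta}=\widehat{\Gamma}\cup\widehat{\Delta}$ for all finite $\Gamma,\Delta$. *)

(* Defs.v *)
From mathcomp Require Import all_boot.
From mathcomp Require Export finmap.
Set Implicit Arguments. Unset Strict Implicit. Unset Printing Implicit Defensive.
Local Open Scope fset_scope.

Section Setting.
Variable L : choiceType.

Definition argument := ({fset L} * L)%type.

Definition Args (der : {fset L} -> L -> Prop) (S : L -> Prop) (a : argument) : Prop :=
  (forall x, x \in a.1 -> S x) /\ der a.1 a.2.

(* ctr psi gamma  means  gamma \in overline psi. *)
Definition attacks (ctr : L -> L -> Prop) (hat : {fset L} -> {fset L})
  (a b : argument) : Prop :=
  exists psi, psi \in hat b.1 /\ ctr psi a.2.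

Definition conflict_free ctr hat (E : argument -> Prop) : Prop :=
  forall a b, E a -> E b -> ~ attacks ctr hat a b.

Definition defends ctr hat (A E : argument -> Prop) (a : argument) : Prop :=
  forall b, A b -> attacks ctr hat b a -> exists c, E c /\ attacks ctr hat c b.

Definition complete_ext ctr hat (A E : argument -> Prop) : Prop :=
  [/\ (forall a, E a -> A a),
      conflict_free ctr hat E,
      (forall a, E a -> defends ctr hat A E a) &
      (forall a, A a -> defends ctr hat A E a -> E a)].

Definition grounded ctr hat (A E : argument -> Prop) : Prop :=
  complete_ext ctr hat A E /\
  forall E', complete_ext ctr hat A E' -> forall a, E a -> E' a.

Inductive plus (der : {fset L} -> L -> Prop) (phi : L) : {fset L} -> L -> Prop :=
| plus_base G g : der G g -> plus der phi G g
| plus_ax : plus der phi fset0 phi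
| plus_trans G psi D g :
    plus der phi G psi -> plus der phi D g -> psi \in D ->
    plus der phi (G `|` (D `\ psi)) g.

Definition Cut (der : {fset L} -> L -> Prop) : Prop :=
  forall phi G D g, der G phi -> plus der phi D g -> der (G `|` D) g.

Definition pointed (hat : {fset L} -> {fset L}) : Prop :=
  forall G D, hat (G `|` D) = hat G `|` hat D.

Definition grd_entails der ctr hat (S : L -> Prop) (phi : L) : Prop :=
  exists E, grounded ctr hat (Args der S) E /\ exists G, E (G, phi).

End Setting.

(* Main.v *)
Require Import Defs.
From mathcomp Require Import all_boot finmap.
Local Open Scope fset_scope.

Section Gen.
Variable L : choiceType.
Variable ctr : L -> L -> Prop.
Variable hat : {fset L} -> {fset L}.
Variable A : argument L -> Prop.

Lemma defends_mono (X Y : argument L -> Prop) a :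
  (forall x, X x -> Y x) -> defends ctr hat A X a -> defends ctr hat A Y a.
Proof. move=> XY D b Ab att; case: (D b Ab att) => c [Xc ac]; exists c; split=> //; exact: XY. Qed.

Arguments defends_mono {X Y a}.

Definition lfp : argument L -> Prop := fun a =>
  forall X : argument L -> Prop,
    (forall b, A b -> defends ctr hat A X b -> X b) -> X a.

Lemma lfp_pre b : A b -> defends ctr hat A lfp b -> lfp b.
Proof.
move=> Ab D X HX; apply: (HX) => //; apply: (defends_mono _ D) => x lx; exact: (lx X HX).
Qed.

Lemma lfp_A a : lfp a -> A a.
Proof. by move=> H; apply: H. Qed.



Arguments lfp_A {a}.

Lemma lfp_post a : lfp a -> A a /\ defends ctr hat A lfp a.
Proof.
move=> H; apply: (H (fun a => A a /\ defends ctr hat A lfp a)) => b Ab D.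
split=> //; apply: defends_mono D => x [Ax Dx]; exact: lfp_pre.
Qed.

Arguments lfp_post {a}.

Lemma lfp_cf : conflict_free ctr hat lfp.
Proof.
pose P := fun a => lfp a /\ forall b, lfp b -> ~ attacks ctr hat b a.
have HP : forall a, lfp a -> P a.
  move=> a la; apply: la => b Ab D; split.
    apply: lfp_pre => //; apply: defends_mono D => x [] //.
  move=> c lc att.
  case: (D c (lfp_A lc) att) => d [[ld Pd] adc].
  case: (lfp_post lc) => _ Dc.
  case: (Dc d (lfp_A ld) adc) => e [le aed].
  exact: (Pd e le aed).
move=> a b la lb; case: (HP b lb) => _ H; exact: H.
Qed.

Lemma lfp_complete : complete_ext ctr hat A lfp.
Proof.
split.
- by move=> a; apply: lfp_A.
- exact: lfp_cf.
- by move=> a la; case: (lfp_post la).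
- by move=> a; apply: lfp_pre.
Qed.

Lemma grd_ind E : grounded ctr hat A E ->
  forall P : argument L -> Prop,
  (forall b, A b -> defends ctr hat A (fun x => E x /\ P x) b -> P b) ->
  forall a, E a -> P a.
Proof.
move=> [[EA Ecf Edef Ecl] Emin] P HP a Ea.
have la := Emin _ lfp_complete a Ea.
suff: E a /\ P a by case.
apply: (la (fun x => E x /\ P x)) => b Ab D; split; last exact: HP.
apply: Ecl => //; apply: defends_mono D => x [] //.
Qed.

End Gen.
Arguments grd_ind {L ctr hat A E}.

Theorem theorem4 (L : choiceType) (der : {fset L} -> L -> Prop)
  (ctr : L -> L -> Prop) (hat : {fset L} -> {fset L})
  (hat0 : hat fset0 = fset0)
  (Hcut : Cut der) (Hpt : pointed hat)
  (S : L -> Prop) (phi : L)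
  (G1 G2 : argument L -> Prop)
  (HG1 : grounded ctr hat (Args der S) G1)
  (HG2 : grounded ctr hat (Args (plus der phi) S) G2)
  (Hent : grd_entails der ctr hat S phi) :
  (exists Phi, G1 (Phi, phi)) /\
  (forall a, G1 a -> G2 a) /\
  (forall a, (G2 a /\ Args der S a) <-> G1 a) /\
  (forall Phi, G1 (Phi, phi) ->
     forall Gam gam, G2 (Gam, gam) -> ~ Args der S (Gam, gam) ->
       G1 (Gam `|` Phi, gam)).
Proof.
have [Phi G1Phi] : exists Phi, G1 (Phi, phi).
  case: Hent => E [HE [G EG]]; exists G; exact: (HE.2 G1 HG1.1).
case: (HG1) => [[G1A G1cf G1def G1cl] G1min].
case: (HG2) => [[G2A G2cf G2def G2cl] G2min].
have main : forall Phi, G1 (Phi, phi) -> (forall a, G1 a -> G2 a) /\ (forall a, G2 a -> G1 (a.1 `|` Phi, a.2) /\ (Args der S a -> G1 a)).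
clear G1Phi Phi => Phi G1Phi.
have [PhiS derPhi] := G1A _ G1Phi.
have star : forall Gam gam, Args (plus der phi) S (Gam, gam) ->
    Args der S (Gam `|` Phi, gam).
  move=> Gam gam [GS pg]; split=> /=.
    move=> x; rewrite in_fsetU => /orP [] ?; [exact: GS | exact: PhiS].
  rewrite fsetUC; exact: Hcut derPhi pg.
have attU : forall c Gam gam, attacks ctr hat c (Gam `|` Phi, gam) ->
    attacks ctr hat c (Gam, gam) \/ attacks ctr hat c (Phi, phi).
  move=> c Gam gam [psi [/= + cp]]; rewrite Hpt in_fsetU => /orP [] h.
    by left; exists psi.
  by right; exists psi.
have attS : forall c a b, attacks ctr hat c (a, b) ->
    forall a' b', (forall psi, psi \in hat a -> psi \in hat a') ->
    attacks ctr hat c (a', b').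
  move=> c a b [psi [h1 h2]] a' b' H; exists psi; split=> //; exact: H.
have sub12 : forall a, G1 a -> G2 a.
  apply: (grd_ind HG1) => -[Gam gam] Ab D.
  apply: G2cl.
    by case: Ab => ? ?; split=> //; apply: plus_base.
  move=> [Del del] Ab' att.
  have Hs := star _ _ Ab'.
  have att' : attacks ctr hat (Gam `|` Phi, del) (Gam, gam).
    by case: att => psi [? ?]; exists psi.
  case: (D _ Hs att') => c [[G1c G2c] acd].
  case: (attU _ _ _ acd) => h.
    by exists c; split=> //; case: h => psi [? ?]; exists psi.
  by exfalso; apply: (G1cf c (Phi, phi)).
have key : forall a, G2 a ->
    G1 (a.1 `|` Phi, a.2) /\ (Args der S a -> G1 a).
  apply: (grd_ind HG2) => -[Gam gam] Ab D /=.
  have hat_case : forall d, Args der S d -> attacks ctr hat d (Gam, gam) ->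
      exists c, G1 c /\ attacks ctr hat c d.
    move=> d Ad att.
    have Ad2 : Args (plus der phi) S d by case: Ad => ? ?; split=> //; apply: plus_base.
    case: (D d Ad2 att) => -[Del del] [[_ [P1 _]] acd].
    exists (Del `|` Phi, del); split=> //;
    by case: acd => psi [? ?]; exists psi.
  split.
    apply: G1cl; first exact: star.
    move=> d Ad att; case: (attU _ _ _ att) => h.
      exact: hat_case.
    exact: (G1def _ G1Phi d Ad h).
  move=> Ab1; apply: G1cl => //.
by split.
have [sub12 key] := main _ G1Phi.
split; first by exists Phi.
split=> //; split.
  move=> a; split; first by move=> [/key [_ H] /H].
  move=> G1a; split; [exact: sub12 | exact: G1A].
move=> Phi' G1Phi' Gam gam G2a _.
by case: (main _ G1Phi') => _ /(_ _ G2a) [].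
Qed.
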